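(* Let $1\to H\to\Gamma\xrightarrow{\pi}K\to1$ be a short exact sequence of groups where $H$ is amenable, $\Gamma$ is finitely generated and $K$ is extraterrestrial. Then $\Gamma$ is extraterrestrial.
   Context: A finitely generated group is extraterrestrial if its Cayley graph with respect to some (equivalently any) finite symmetric generating set is extraterrestrial. A graph $G=(V,E)$ is extraterrestrial if for every $m$ there is $k$ such that for every $r$ there is a triple $(U,F,O)$ of pairwise disjoint finite vertex sets with $U\neq\emptyset$, $|U|\ge m|F|$, a bijection $\mu:U\to O$ with $d_G(u,\mu(u))\le k$, and every path from $U$ to $O$ either contains a vertex of $F$ or has length at least $r$. *)

(* Defs.v *)
From Stdlib Require Import Reals List Permutation.
Import ListNotations.
Open Scope R_scope.

Record Grp := {
  carrier :> Type;
  gmul : carrier -> carrier -> carrier;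
  gone : carrier;
  ginv : carrier -> carrier;
  gmulA : forall x y z, gmul x (gmul y z) = gmul (gmul x y) z;
  gmul1l : forall x, gmul gone x = x;
  gmul1r : forall x, gmul x gone = x;
  gmulVl : forall x, gmul (ginv x) x = gone;
  gmulVr : forall x, gmul x (ginv x) = gone
}.

Arguments gmul {g}.
Arguments gone {g}.
Arguments ginv {g}.

Definition is_hom (G1 G2 : Grp) (f : G1 -> G2) : Prop :=
  forall x y, f (gmul x y) = gmul (f x) (f y).

Definition short_exact (H G K : Grp) (i : H -> G) (p : G -> K) : Prop :=
  is_hom H G i /\ is_hom G K p /\
  (forall x y, i x = i y -> x = y) /\
  (forall k : K, exists g : G, p g = k) /\
  (forall g : G, p g = gone <-> exists h : H, i h = g).

Definition amenable (G : Grp) : Prop :=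
  exists m : (G -> Prop) -> R,
    (forall A, 0 <= m A) /\
    m (fun _ => True) = 1 /\
    (forall A B, (forall x, A x -> B x -> False) ->
       m (fun x => A x \/ B x) = m A + m B) /\
    (forall (g : G) A, m (fun x => A (gmul (ginv g) x)) = m A).

(* chain adj x l : the walk x :: l has consecutive vertices adjacent.
   The walk x :: l ends at (last l x) and has length (length l). *)
Fixpoint chain {V : Type} (adj : V -> V -> Prop) (x : V) (l : list V) : Prop :=
  match l with
  | [] => True
  | y :: l' => adj x y /\ chain adj y l'
  end.

Definition dist_le {V : Type} (adj : V -> V -> Prop) (x y : V) (k : nat) : Prop :=
  exists l, chain adj x l /\ last l x = y /\ (length l <= k)%nat.

Definition disjoint {V : Type} (A B : list V) : Prop :=
  forall v, In v A -> In v B -> False.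

Definition extraterrestrial_graph {V : Type} (adj : V -> V -> Prop) : Prop :=
  forall m : nat, exists k : nat, forall r : nat,
    exists (U F O : list V) (mu : V -> V),
      U <> [] /\ NoDup U /\ NoDup F /\ NoDup O /\
      disjoint U F /\ disjoint U O /\ disjoint F O /\
      (length U >= m * length F)%nat /\
      Permutation (map mu U) O /\
      (forall u, In u U -> dist_le adj u (mu u) k) /\
      (forall x l, In x U -> chain adj x l -> In (last l x) O ->
         (exists v, In v (x :: l) /\ In v F) \/ (r <= length l)%nat).

Definition symmetric_set (G : Grp) (S : list G) : Prop :=
  forall s, In s S -> In (ginv s) S.

Definition generates (G : Grp) (S : list G) : Prop :=
  forall g : G, exists w : list G,
    (forall s, In s w -> In s S) /\ g = fold_right gmul gone w.

Definition cayley_adj (G : Grp) (S : list G) (x y : G) : Prop :=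
  exists s, In s S /\ y = gmul x s.

Definition finitely_generated (G : Grp) : Prop :=
  exists S : list G, generates G S.

Definition extraterrestrial_group (G : Grp) : Prop :=
  exists S : list G, symmetric_set G S /\ generates G S /\
    extraterrestrial_graph (cayley_adj G S).

(* Main.v *)
Require Import Defs.
From Stdlib Require Import List ClassicalEpsilon Classical Lia Arith Reals Lra FunctionalExtensionality PropExtensionality Permutation.
Import ListNotations.
Local Open Scope nat_scope.

Definition dec {X : Type} (x y : X) : {x = y} + {x <> y} :=
  excluded_middle_informative (x = y).

Definition memb {X : Type} (x : X) (l : list X) : bool :=
  if in_dec dec x l then true else false.

Lemma memb_true {X} (x : X) l : memb x l = true <-> In x l.
Proof. unfold memb; destruct (in_dec dec x l); split; intros; auto; discriminate. Qed.

Lemma memb_false {X} (x : X) l : memb x l = false <-> ~ In x l.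
Proof. unfold memb; destruct (in_dec dec x l); split; intros; auto; try discriminate; tauto. Qed.

Definition dcard {X : Type} (l : list X) : nat := length (nodup dec l).

Lemma dcard_eq {X} (Z l : list X) : NoDup Z -> (forall x, In x Z <-> In x l) -> length Z = dcard l.
Proof.
  intros ND H. unfold dcard. apply Nat.le_antisymm.
  - apply NoDup_incl_length; auto. intros x Hx. apply nodup_In, H, Hx.
  - apply NoDup_incl_length. apply NoDup_nodup. intros x Hx. apply H. apply nodup_In in Hx. exact Hx.
Qed.

Lemma dcard_incl {X} (A B : list X) : incl A B -> dcard A <= dcard B.
Proof.
  intros H. unfold dcard. apply NoDup_incl_length. apply NoDup_nodup.
  intros x Hx. apply nodup_In. apply H. apply nodup_In in Hx. exact Hx.
Qed.

Lemma dcard_same {X} (A B : list X) : (forall x, In x A <-> In x B) -> dcard A = dcard B.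
Proof. intros H. apply Nat.le_antisymm; apply dcard_incl; intros x; apply H. Qed.

Lemma dcard_NoDup {X} (l : list X) : NoDup l -> dcard l = length l.
Proof. intros H. symmetry. apply dcard_eq; tauto. Qed.

Lemma dcard_app_disj {X} (A B : list X) : (forall x, In x A -> ~ In x B) -> dcard (A ++ B) = dcard A + dcard B.
Proof.
  intros H. unfold dcard at 2 3. rewrite <- length_app. symmetry. apply dcard_eq.
  - apply NoDup_app; try apply NoDup_nodup. intros a Ha Hb. apply nodup_In in Ha, Hb. exact (H a Ha Hb).
  - intros x. rewrite !in_app_iff, !nodup_In. tauto.
Qed.



Lemma dcard_split {X} (A B : list X) :
  dcard A = dcard (filter (fun x => memb x B) A) + dcard (filter (fun x => negb (memb x B)) A).
Proof.
  rewrite <- dcard_app_disj.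
  - apply dcard_same. intros x. rewrite in_app_iff, !filter_In.
    destruct (memb x B); simpl; intuition congruence.
  - intros x H1 H2. rewrite filter_In in H1, H2. destruct H1 as [_ H1]; destruct H2 as [_ H2].
    rewrite H1 in H2. discriminate.
Qed.

Lemma dcard_incl_excl {X} (A B : list X) :
  dcard (A ++ B) + dcard (filter (fun x => memb x B) A) = dcard A + dcard B.
Proof.
  rewrite (dcard_split A B).
  assert (E : dcard (A ++ B) = dcard (filter (fun x => negb (memb x B)) A) + dcard B).
  { rewrite <- dcard_app_disj.
    - apply dcard_same. intros x. rewrite !in_app_iff, filter_In.
      destruct (memb x B) eqn:E; simpl.
      + apply memb_true in E. tauto.
      + intuition congruence.
    - intros x H1 H2. rewrite filter_In in H1. destruct H1 as [_ H1].
      apply memb_true in H2. rewrite H2 in H1. discriminate. }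
  lia.
Qed.

Lemma dcard_app_le {X} (A B : list X) : dcard (A ++ B) <= dcard A + dcard B.
Proof. pose proof (dcard_incl_excl A B). lia. Qed.

Lemma dcard_nil {X} : @dcard X [] = 0.
Proof. reflexivity. Qed.

Lemma dcard_cons_le {X} (a : X) l : dcard (a :: l) <= S (dcard l).
Proof. apply (dcard_app_le [a] l). Qed.

Lemma dcard_zero {X} (l : list X) : dcard l = 0 -> l = [].
Proof.
  destruct l as [|a l]; auto. intros H. exfalso.
  assert (1 <= dcard (a :: l)). { change 1 with (dcard [a]). apply dcard_incl. intros x [<-|[]]; simpl; auto. }
  lia.
Qed.


Section Hall.
Variables (V W : Type) (nbr : V -> list W).

Definition Nst (U : list W) (S : list V) : list W :=
  filter (fun y => negb (memb y U)) (flat_map nbr S).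

Definition HC (elig : V -> Prop) (U : list W) : Prop :=
  forall S, NoDup S -> (forall s, In s S -> elig s) -> length S <= dcard (Nst U S).

Lemma Nst_In U S y : In y (Nst U S) <-> (exists s, In s S /\ In y (nbr s)) /\ ~ In y U.
Proof.
  unfold Nst. rewrite filter_In, in_flat_map.
  destruct (memb y U) eqn:E; simpl.
  - apply memb_true in E. intuition discriminate.
  - apply memb_false in E. intuition.
Qed.

Lemma notHC e U : ~ HC e U -> exists S, NoDup S /\ (forall s, In s S -> e s) /\ dcard (Nst U S) < length S.
Proof.
  intros H. unfold HC in H. apply not_all_ex_not in H. destruct H as [S H].
  exists S. apply imply_to_and in H. destruct H as [H1 H].
  apply imply_to_and in H. destruct H as [H2 H]. repeat split; auto. lia.
Qed.

Lemma tight_union e U A B : HC e U -> NoDup A -> NoDup B ->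
  (forall s, In s A -> e s) -> (forall s, In s B -> e s) ->
  dcard (Nst U A) <= length A -> dcard (Nst U B) <= length B ->
  dcard (Nst U (A ++ filter (fun x => negb (memb x A)) B)) <= length (A ++ filter (fun x => negb (memb x A)) B).
Proof.
  intros hc nA nB eA eB tA tB.
  set (I := filter (fun x => memb x A) B).
  assert (LC : length (A ++ filter (fun x => negb (memb x A)) B) + length I = length A + length B).
  { rewrite length_app. pose proof (filter_length (fun x => memb x A) B). unfold I. lia. }
  assert (hI : length I <= dcard (Nst U I)).
  { apply hc. apply NoDup_filter; auto. intros s Hs. unfold I in Hs. apply filter_In in Hs. apply eB; tauto. }
  assert (E1 : dcard (Nst U (A ++ filter (fun x => negb (memb x A)) B)) = dcard (Nst U A ++ Nst U B)).
  { apply dcard_same. intros y. rewrite in_app_iff, !Nst_In. split.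
    - intros [[s [Hs Hy]] Hu]. apply in_app_iff in Hs. destruct Hs as [Hs|Hs].
      + left. split; eauto.
      + right. apply filter_In in Hs. split; eauto. exists s; tauto.
    - intros [[[s [Hs Hy]] Hu]|[[s [Hs Hy]] Hu]]; split; auto; exists s; split; auto; apply in_app_iff.
      + left; auto.
      + destruct (memb s A) eqn:E.
        * left. apply memb_true; auto.
        * right. apply filter_In. rewrite E. auto. }
  assert (E2 : dcard (Nst U I) <= dcard (filter (fun x => memb x (Nst U B)) (Nst U A))).
  { apply dcard_incl. intros y Hy. apply filter_In. apply Nst_In in Hy.
    destruct Hy as [[s [Hs Hy]] Hu]. unfold I in Hs. apply filter_In in Hs. destruct Hs as [Hs Hs'].
    apply memb_true in Hs'. split.
    - apply Nst_In. split; eauto.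
    - apply memb_true. apply Nst_In. split; eauto. }
  pose proof (dcard_incl_excl (Nst U A) (Nst U B)). lia.
Qed.

Lemma hall_step e U x : HC e U -> e x ->
  exists y, In y (nbr x) /\ ~ In y U /\ HC (fun v => e v /\ v <> x) (y :: U).
Proof.
  intros hc ex. apply NNPP. intros Hn.
  assert (H : forall y, In y (nbr x) -> ~ In y U -> ~ HC (fun v => e v /\ v <> x) (y :: U)).
  { intros y h1 h2 h3. apply Hn. exists y; auto. }
  set (L0 := filter (fun y => negb (memb y U)) (nbr x)).
  assert (Cl : forall L, incl L L0 -> exists T, NoDup T /\ (forall s, In s T -> e s /\ s <> x) /\
            dcard (Nst U T) <= length T /\ incl L (Nst U T)).
  { induction L as [|y L IH]; intros Hinc.
    - exists []. split; [constructor|]. split; [intros a []|]. split; [unfold Nst, dcard; simpl; lia|]. intros a [].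
    - destruct IH as [T [nT [eT [tT iT]]]]. { intros a Ha. apply Hinc. right; auto. }
      assert (Hy : In y L0) by (apply Hinc; left; auto).
      unfold L0 in Hy. apply filter_In in Hy. destruct Hy as [Hy1 Hy2].
      assert (Hy3 : ~ In y U). { apply memb_false. destruct (memb y U); simpl in *; auto; discriminate. }
      destruct (notHC _ _ (H y Hy1 Hy3)) as [S [nS [eS lS]]].
      assert (I1 : incl (Nst U S) (y :: Nst (y :: U) S)).
      { intros z Hz. apply Nst_In in Hz. destruct (dec y z) as [->|ne]. left; auto. right.
        apply Nst_In. destruct Hz as [h1 h2]. split; auto. intros [h|h]; auto. }
      assert (yin : In y (Nst U S)).
      { apply NNPP. intros Hno.
        assert (incl (Nst U S) (Nst (y :: U) S)).
        { intros z Hz. destruct (I1 z Hz) as [<-|h]; auto. contradiction. }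
        pose proof (dcard_incl _ _ H0). pose proof (hc S nS (fun s h => proj1 (eS s h))). lia. }
      assert (tS : dcard (Nst U S) <= length S).
      { pose proof (dcard_incl _ _ I1). pose proof (dcard_cons_le y (Nst (y :: U) S)). lia. }
      exists (T ++ filter (fun z => negb (memb z T)) S). split; [|split; [|split]].
      + apply NoDup_app; auto. apply NoDup_filter; auto.
        intros a Ha Hb. apply filter_In in Hb. destruct Hb as [_ Hb]. apply memb_true in Ha. rewrite Ha in Hb. discriminate.
      + intros s Hs. apply in_app_iff in Hs. destruct Hs as [Hs|Hs]. apply eT; auto. apply filter_In in Hs. apply eS; tauto.
      + apply (tight_union e); auto. intros s Hs; apply eT; auto. intros s Hs; apply eS; auto.
      + intros z Hz. apply Nst_In.
        assert (Hz' : In z (Nst U T) \/ In z (Nst U S)).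
        { destruct Hz as [<-|Hz]. right; auto. left; apply iT; auto. }
        destruct Hz' as [Hz'|Hz']; apply Nst_In in Hz'; destruct Hz' as [[s [Hs Hzs]] Hu]; split; auto;
          exists s; split; auto; apply in_app_iff.
        * left; auto.
        * destruct (memb s T) eqn:E. left; apply memb_true; auto. right; apply filter_In; rewrite E; auto. }
  destruct (Cl L0 (incl_refl _)) as [T [nT [eT [tT iT]]]].
  assert (xT : ~ In x T). { intros h. destruct (eT x h). auto. }
  pose proof (hc (x :: T) (NoDup_cons _ xT nT)) as h.
  assert (h2 : length (x :: T) <= dcard (Nst U (x :: T))).
  { apply h. intros s [<-|hs]; auto. apply eT; auto. }
  assert (incl (Nst U (x :: T)) (Nst U T)).
  { intros z Hz. apply Nst_In in Hz. destruct Hz as [[s [[<-|Hs] Hzs]] Hu].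
    - apply iT. unfold L0. apply filter_In. split; auto. apply memb_false in Hu. rewrite Hu; auto.
    - apply Nst_In. split; eauto. }
  pose proof (dcard_incl _ _ H0). simpl in h2. lia.
Qed.

End Hall.


Section Greedy.
Variables (V W : Type) (nbr : V -> list W) (w0 : W) (Base : V -> Prop) (st : nat -> list V).
Hypothesis st_base : forall n v, In v (st n) -> Base v.
Hypothesis st_cover : forall v, Base v -> exists n, In v (st n).
Hypothesis hc0 : HC V W nbr Base [].

Lemma HC_mono (e1 e2 : V -> Prop) U : (forall v, e2 v -> e1 v) -> HC V W nbr e1 U -> HC V W nbr e2 U.
Proof. intros h hc S nS eS. apply hc; auto. Qed.

Definition Inv (s : list (V * W)) : Prop :=
  HC V W nbr (fun v => Base v /\ ~ In v (map fst s)) (map snd s) /\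
  (forall v w, In (v, w) s -> In w (nbr v) /\ Base v) /\
  NoDup (map fst s) /\ NoDup (map snd s).

Lemma step1 s x : Inv s -> exists ext, Inv (ext ++ s) /\ (Base x -> In x (map fst (ext ++ s))).
Proof.
  intros [hc [hn [n1 n2]]].
  destruct (classic (Base x /\ ~ In x (map fst s))) as [[bx nx]|H].
  - destruct (hall_step V W nbr _ _ x hc (conj bx nx)) as [y [y1 [y2 hc']]].
    exists [(x, y)]. simpl. split; [split; [|split; [|split]]|].
    + eapply HC_mono; [|exact hc']. simpl. intros v [b hv].
      split; [split|]; [exact b| intros h; apply hv; right; exact h | intros ->; apply hv; left; reflexivity].
    + intros v w [h|h]. inversion h; subst; auto. apply hn; auto.
    + constructor; auto.
    + constructor; auto.
    + auto.
  - exists []. simpl. split. split; auto. intros bx. apply NNPP. intros h. apply H. auto.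
Qed.

Lemma in_fst_app (ext s : list (V * W)) v : In v (map fst s) -> In v (map fst (ext ++ s)).
Proof. intros h. rewrite map_app. apply in_app_iff. right; auto. Qed.

Lemma stepL s L : Inv s -> exists ext, Inv (ext ++ s) /\ (forall v, In v L -> Base v -> In v (map fst (ext ++ s))).
Proof.
  revert s. induction L as [|x L IH]; intros s hs.
  - exists []. split; auto. intros v [].
  - destruct (IH s hs) as [e1 [h1 h1']].
    destruct (step1 (e1 ++ s) x h1) as [e2 [h2 h2']].
    exists (e2 ++ e1). rewrite <- app_assoc. split; auto.
    intros v [<-|hv] bv; auto. apply in_fst_app. auto.
Qed.

Definition lookup (v : V) := fix lk (l : list (V * W)) : W :=
  match l with [] => w0 | (a, b) :: l => if dec v a then b else lk l end.

Lemma lookup_In v l : In v (map fst l) -> In (v, lookup v l) l.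
Proof.
  induction l as [|[a b] l IH]; simpl; intros h. destruct h.
  destruct (dec v a) as [->|ne]. left; auto. right. apply IH. destruct h; auto. congruence.
Qed.

Lemma lookup_app v ext l : NoDup (map fst (ext ++ l)) -> In v (map fst l) -> lookup v (ext ++ l) = lookup v l.
Proof.
  induction ext as [|[a b] ext IH]; simpl; intros nd h; auto.
  inversion nd; subst. destruct (dec v a) as [->|ne].
  - exfalso. apply H1. rewrite map_app. apply in_app_iff; right; auto.
  - apply IH; auto.
Qed.

Lemma snd_inj (l : list (V * W)) a a' b : NoDup (map snd l) -> In (a, b) l -> In (a', b) l -> a = a'.
Proof.
  induction l as [|[x y] l IH]; simpl; intros nd h1 h2. destruct h1.
  inversion nd; subst. destruct h1 as [h1|h1]; destruct h2 as [h2|h2].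
  - inversion h1; inversion h2; congruence.
  - inversion h1; subst. exfalso. apply H1. apply (in_map snd) in h2. exact h2.
  - inversion h2; subst. exfalso. apply H1. apply (in_map snd) in h1. exact h1.
  - eauto.
Qed.

Definition inh : inhabited (list (V * W)) := inhabits [].

Fixpoint state (n : nat) : list (V * W) :=
  match n with
  | 0 => []
  | S n => epsilon inh (fun s => (exists ext, s = ext ++ state n) /\ Inv s /\
                                  forall v, In v (st n) -> In v (map fst s))
  end.

Lemma state_S n : Inv (state n) -> (exists ext, state (S n) = ext ++ state n) /\ Inv (state (S n)) /\
                 forall v, In v (st n) -> In v (map fst (state (S n))).
Proof.
  intros hi. simpl. apply (epsilon_spec inh (fun s => (exists ext, s = ext ++ state n) /\ Inv s /\
                                  forall v, In v (st n) -> In v (map fst s))).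
  destruct (stepL (state n) (st n) hi) as [e [h1 h2]]. exists (e ++ state n). split; eauto.
Qed.

Lemma state_inv n : Inv (state n).
Proof.
  induction n as [|n IH].
  - split; [|split; [|split]]; simpl; auto using NoDup_nil.
    + eapply HC_mono; [|exact hc0]. tauto.
    + intros v w [].
  - apply state_S; auto.
Qed.

Lemma state_prefix n k : exists ext, state (k + n) = ext ++ state n.
Proof.
  induction k as [|k IH]. exists []. auto.
  destruct IH as [e1 h1]. destruct (state_S (k + n) (state_inv _)) as [[e2 h2] _].
  exists (e2 ++ e1). change (S k + n) with (S (k + n)). rewrite h2, h1, app_assoc. auto.
Qed.

Definition stage (v : V) : nat := epsilon (inhabits 0) (fun n => In v (st n)).

Definition fmatch (v : V) : W := lookup v (state (S (stage v))).

Lemma fmatch_in v : Base v -> In (v, fmatch v) (state (S (stage v))).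
Proof.
  intros bv. unfold fmatch. apply lookup_In.
  destruct (state_S (stage v) (state_inv _)) as [_ [_ h]]. apply h.
  unfold stage. apply (epsilon_spec (inhabits 0) (fun n => In v (st n))). auto.
Qed.

Lemma fmatch_in_big v N : Base v -> S (stage v) <= N -> In (v, fmatch v) (state N).
Proof.
  intros bv hN. destruct (state_prefix (S (stage v)) (N - S (stage v))) as [e he].
  replace (N - S (stage v) + S (stage v)) with N in he by lia.
  pose proof (fmatch_in v bv). rewrite he. apply in_or_app. right. auto.
Qed.

Theorem greedy : exists f : V -> W, (forall v, Base v -> In (f v) (nbr v)) /\
   (forall v v', Base v -> Base v' -> f v = f v' -> v = v').
Proof.
  exists fmatch. split.
  - intros v bv. pose proof (fmatch_in v bv). destruct (state_inv (S (stage v))) as [_ [h _]].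
    apply (h _ _ H).
  - intros v v' bv bv' e. set (N := S (stage v) + S (stage v')).
    pose proof (fmatch_in_big v N bv ltac:(unfold N; lia)).
    pose proof (fmatch_in_big v' N bv' ltac:(unfold N; lia)).
    rewrite <- e in H0. destruct (state_inv N) as [_ [_ [_ nd]]].
    eapply snd_inj; eauto.
Qed.
End Greedy.


Section GroupLemmas.
Variable G : Grp.
Lemma g_cancel_l (a x y : G) : gmul a x = gmul a y -> x = y.
Proof.
  intros h. rewrite <- (gmul1l G x), <- (gmul1l G y), <- (gmulVl G a), <- !gmulA, h. auto.
Qed.
Lemma g_cancel_r (a x y : G) : gmul x a = gmul y a -> x = y.
Proof.
  intros h. rewrite <- (gmul1r G x), <- (gmul1r G y), <- (gmulVr G a), !gmulA, h. auto.
Qed.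
Lemma g_invK (x : G) : ginv (ginv x) = x.
Proof. apply (g_cancel_l (ginv x)). rewrite gmulVr, gmulVl. auto. Qed.
Lemma g_inv_mul (x y : G) : ginv (gmul x y) = gmul (ginv y) (ginv x).
Proof.
  apply (g_cancel_l (gmul x y)). rewrite gmulVr, gmulA, <- (gmulA G x y), gmulVr, gmul1r, gmulVr. auto.
Qed.
Lemma g_VK (x y : G) : gmul (ginv x) (gmul x y) = y.
Proof. rewrite gmulA, gmulVl, gmul1l. auto. Qed.
Lemma g_KV (x y : G) : gmul x (gmul (ginv x) y) = y.
Proof. rewrite gmulA, gmulVr, gmul1l. auto. Qed.
Lemma g_mulKr (x y : G) : gmul (gmul x y) (ginv y) = x.
Proof. rewrite <- gmulA, gmulVr, gmul1r. auto. Qed.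
Lemma g_mulVKr (x y : G) : gmul (gmul x (ginv y)) y = x.
Proof. rewrite <- gmulA, gmulVl, gmul1r. auto. Qed.
Lemma g_inv1 : ginv (@gone G) = gone.
Proof. rewrite <- (gmul1l G (ginv gone)). apply gmulVr. Qed.
Lemma g_inv_inj (x y : G) : ginv x = ginv y -> x = y.
Proof. intros h. rewrite <- (g_invK x), <- (g_invK y), h. auto. Qed.
End GroupLemmas.

Section Mean.
Variable H : Grp.
Variable m : (H -> Prop) -> R.
Hypothesis m0 : forall A, (0 <= m A)%R.
Hypothesis m1 : m (fun _ => True) = 1%R.
Hypothesis madd : forall A B, (forall x, A x -> B x -> False) -> m (fun x => A x \/ B x) = (m A + m B)%R.

Lemma m_ext A B : (forall x, A x <-> B x) -> m A = m B.
Proof.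
  intros h. f_equal. apply functional_extensionality. intros x. apply propositional_extensionality. auto.
Qed.

Lemma m_mono A B : (forall x, A x -> B x) -> (m A <= m B)%R.
Proof.
  intros h. rewrite (m_ext B (fun x => A x \/ (B x /\ ~ A x))).
  - rewrite madd. pose proof (m0 (fun x => B x /\ ~ A x)). lra. intros x a [_ b]; auto.
  - intros x. split. intros b. destruct (classic (A x)); auto. intros [a|[b _]]; auto.
Qed.

Definition rsum {T} (f : T -> R) (l : list T) : R := fold_right (fun a acc => (f a + acc)%R) 0%R l.

Lemma rsum_app {T} f (l1 l2 : list T) : rsum f (l1 ++ l2) = (rsum f l1 + rsum f l2)%R.
Proof. induction l1; simpl; [lra|]. rewrite IHl1. lra. Qed.

Lemma rsum_map {T U} (f : U -> R) (g : T -> U) l : rsum f (map g l) = rsum (fun x => f (g x)) l.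
Proof. induction l; simpl; auto. rewrite IHl; auto. Qed.

Lemma m_empty : m (fun _ => False) = 0%R.
Proof.
  pose proof (madd (fun _ => False) (fun _ => False) (fun x a _ => a)).
  rewrite (m_ext _ (fun _ => False)) in H0. lra. tauto.
Qed.

Lemma m_union {I} (P : I -> H -> Prop) (l : list I) : NoDup l ->
  (forall i j x, In i l -> In j l -> P i x -> P j x -> i = j) ->
  m (fun x => exists i, In i l /\ P i x) = rsum (fun i => m (P i)) l.
Proof.
  induction l as [|a l IH]; intros nd hd; simpl.
  - rewrite <- m_empty. apply m_ext. intros x; split; [intros [i [[] _]]|intros []].
  - inversion nd; subst. rewrite <- IH; auto.
    + rewrite <- madd.
      * apply m_ext. intros x. split.
        -- intros [i [[<-|hi] p]]; [left|right]; eauto.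
        -- intros [p|[i [hi p]]]; eauto.
      * intros x p [i [hi q]]. assert (a = i) by (apply (hd a i x); simpl; auto). subst. auto.
    + intros i j x hi hj. apply hd; simpl; auto.
Qed.
End Mean.


Lemma rsum_ext {T} (f g : T -> R) l : (forall x, f x = g x) -> rsum f l = rsum g l.
Proof. intros h; induction l; simpl; auto. rewrite IHl, h; auto. Qed.

Lemma NoDup_map_inj {A B} (f : A -> B) l : (forall x y, f x = f y -> x = y) -> NoDup l -> NoDup (map f l).
Proof.
  intros hi nd; induction nd; simpl; constructor; auto.
  intros h. apply in_map_iff in h. destruct h as [y [e hy]]. apply hi in e. subst. auto.
Qed.

Lemma NoDup_prod2 {T} (l : list T) : NoDup l -> NoDup (list_prod [true; false] l).
Proof.
  intros nd. simpl. rewrite app_nil_r. apply NoDup_app.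
  - apply NoDup_map_inj; auto. intros x y e; inversion e; auto.
  - apply NoDup_map_inj; auto. intros x y e; inversion e; auto.
  - intros [j b] h1 h2. apply in_map_iff in h1, h2. destruct h1 as [? [e1 _]]. destruct h2 as [? [e2 _]].
    rewrite <- e2 in e1. discriminate.
Qed.

Section Folner.
Variable H : Grp.
Variable B : list H.
Hypothesis nB : NoDup B.

Definition Bsym := B ++ map ginv B.

Fixpoint Wd (n : nat) : list H :=
  match n with
  | 0 => [gone]
  | S n => Wd n ++ flat_map (fun b => map (gmul b) (Wd n)) Bsym
  end.

Definition InH0 (x : H) := exists n, In x (Wd n).

Lemma H0_left b x : In b Bsym -> InH0 x -> InH0 (gmul b x).
Proof.
  intros hb [n hn]. exists (S n). simpl. apply in_app_iff. right. apply in_flat_map. exists b. split; auto.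
  apply in_map. auto.
Qed.

Lemma H0_mul n x y : In x (Wd n) -> InH0 y -> InH0 (gmul x y).
Proof.
  revert x. induction n as [|n IH]; intros x hx hy; simpl in hx.
  - destruct hx as [<-|[]]. rewrite gmul1l. auto.
  - apply in_app_iff in hx. destruct hx as [hx|hx]; auto.
    apply in_flat_map in hx. destruct hx as [b [hb hx]]. apply in_map_iff in hx. destruct hx as [w [<- hw]].
    rewrite <- gmulA. apply H0_left; auto.
Qed.

Lemma H0_mul' x y : InH0 x -> InH0 y -> InH0 (gmul x y).
Proof. intros [n hn] hy. eapply H0_mul; eauto. Qed.

Lemma H0_one : InH0 gone.
Proof. exists 0. simpl; auto. Qed.

Lemma Bsym_inv b : In b Bsym -> In (ginv b) Bsym.
Proof.
  unfold Bsym. rewrite !in_app_iff. intros [h|h].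
  - right. apply in_map; auto.
  - left. apply in_map_iff in h. destruct h as [c [<- hc]]. rewrite g_invK. auto.
Qed.

Lemma H0_inv n x : In x (Wd n) -> InH0 (ginv x).
Proof.
  revert x. induction n as [|n IH]; intros x hx; simpl in hx.
  - destruct hx as [<-|[]]. rewrite g_inv1. apply H0_one.
  - apply in_app_iff in hx. destruct hx as [hx|hx]; auto.
    apply in_flat_map in hx. destruct hx as [b [hb hx]]. apply in_map_iff in hx. destruct hx as [w [<- hw]].
    rewrite g_inv_mul. apply H0_mul'. auto. rewrite <- (gmul1r H (ginv b)). apply H0_left.
    apply Bsym_inv; auto. apply H0_one.
Qed.

Lemma H0_inv' x : InH0 x -> InH0 (ginv x).
Proof. intros [n hn]. eapply H0_inv; eauto. Qed.

Lemma H0_B b : In b B -> InH0 b.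
Proof. intros h. rewrite <- (gmul1r H b). apply H0_left. unfold Bsym. apply in_app_iff; auto. apply H0_one. Qed.

Definition rho (x : H) : H := epsilon (inhabits (@gone H)) (fun y => exists h, InH0 h /\ y = gmul h x).

Lemma rho_spec x : exists h, InH0 h /\ rho x = gmul h x.
Proof.
  unfold rho. apply (epsilon_spec (inhabits (@gone H)) (fun y => exists h, InH0 h /\ y = gmul h x)).
  exists x, gone. split. apply H0_one. rewrite gmul1l; auto.
Qed.

Lemma rho_coset c x : InH0 c -> rho (gmul c x) = rho x.
Proof.
  intros hc. unfold rho. f_equal. apply functional_extensionality. intros y. apply propositional_extensionality.
  split.
  - intros [h [hh ->]]. exists (gmul h c). split. apply H0_mul'; auto. rewrite gmulA; auto.
  - intros [h [hh ->]]. exists (gmul h (ginv c)). split. apply H0_mul'; auto. apply H0_inv'; auto.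
    rewrite <- gmulA, g_VK. auto.
Qed.

Definition zz (x : H) := gmul x (ginv (rho x)).

Lemma zz_H0 x : InH0 (zz x).
Proof.
  destruct (rho_spec x) as [h [hh e]]. unfold zz. rewrite e, g_inv_mul, g_KV. apply H0_inv'; auto.
Qed.

End Folner.

Theorem folner (H : Grp) : amenable H -> forall B0 : list H,
  exists Psi Y : list H, Psi <> [] /\ NoDup Psi /\ NoDup Y /\
    (forall b x, In b B0 -> In x Psi -> In (gmul b x) Y) /\ length Y < 2 * length Psi.
Proof.
  intros [m [m0 [m1 [madd minv]]]] B0. apply NNPP. intros NF.
  assert (NF' : forall Psi Y : list H, Psi <> [] -> NoDup Psi -> NoDup Y ->
    (forall b x, In b B0 -> In x Psi -> In (gmul b x) Y) -> 2 * length Psi <= length Y).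
  { intros Psi Y h1 h2 h3 h4. apply Nat.nlt_ge. intros h5. apply NF. exists Psi, Y. auto. }
  set (B := nodup dec B0).
  assert (nB : NoDup B) by apply NoDup_nodup.
  set (nbr := fun v : H * bool => map (fun b => gmul b (fst v)) B).
  assert (HCall : HC (H * bool) H nbr (fun _ => True) []).
  { intros S nS _. destruct S as [|s0 S'] eqn:ES; [simpl; lia|]. rewrite <- ES in *.
    set (Psi := nodup dec (map fst S)).
    assert (h1 : 2 * length Psi <= dcard (Nst _ _ nbr [] S)).
    { apply NF'.
      - intros e. assert (hin : In (fst s0) Psi). { apply nodup_In. rewrite ES. left; auto. }
        rewrite e in hin. destruct hin.
      - apply NoDup_nodup.
      - apply NoDup_nodup.
      - intros b x hb hx. apply nodup_In. apply Nst_In. split; [|intros []].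
        apply nodup_In in hx. apply in_map_iff in hx. destruct hx as [s [<- hs]].
        exists s. split; auto. unfold nbr. apply in_map_iff. exists b. split; auto. apply nodup_In; auto. }
    assert (h2 : length S <= length (list_prod Psi [true; false])).
    { apply NoDup_incl_length; auto. intros [x j] h. apply in_prod_iff. split.
      - apply nodup_In. apply (in_map fst) in h. auto.
      - destruct j; simpl; auto. }
    rewrite length_prod in h2. simpl in h2. lia. }
  set (st := fun n => list_prod (Wd H B n) [true; false]).
  set (Base := fun v : H * bool => InH0 H B (fst v)).
  destruct (greedy (H * bool) H nbr gone Base st) as [f0 [F1 F2]].
  { intros n [x j] h. apply in_prod_iff in h. exists n. tauto. }
  { intros [x j] [n hn]. exists n. apply in_prod_iff. split; auto. destruct j; simpl; auto. }
  { eapply HC_mono; [|exact HCall]. intros; exact I. }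
  set (phi := fun v : H * bool => gmul (f0 (zz H B (fst v), snd v)) (rho H B (fst v))).
  assert (phi_nbr : forall x j, exists b, In b B /\ phi (x, j) = gmul b x).
  { intros x j. assert (hb : Base (zz H B x, j)) by apply zz_H0.
    pose proof (F1 _ hb) as h. unfold nbr in h. apply in_map_iff in h. destruct h as [b [e hb']].
    exists b. split; auto. unfold phi. simpl. rewrite <- e. unfold zz. simpl. rewrite <- gmulA, g_mulVKr. auto. }
  assert (phi_inj : forall x j x' j', phi (x, j) = phi (x', j') -> x = x' /\ j = j').
  { intros x j x' j' e.
    destruct (phi_nbr x j) as [b [hb eb]]. destruct (phi_nbr x' j') as [b' [hb' eb']].
    assert (ex : x' = gmul (gmul (ginv b') b) x).
    { rewrite <- gmulA, <- eb, e, eb', g_VK. auto. }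
    assert (er : rho H B x' = rho H B x).
    { rewrite ex. apply rho_coset. apply H0_mul'. apply H0_inv'. apply H0_B; auto. apply H0_B; auto. }
    unfold phi in e. simpl in e. rewrite er in e. apply g_cancel_r in e.
    apply F2 in e; try apply zz_H0. inversion e. split; auto.
    unfold zz in H1. rewrite er in H1. apply g_cancel_r in H1. auto. }
  set (P := fun (j : bool) (b : H) (x : H) => phi (x, j) = gmul b x).
  assert (E1 : forall j, rsum (fun b => m (P j b)) B = 1%R).
  { intros j. rewrite <- m1. rewrite <- m_union; auto.
    - apply m_ext; auto. intros x. split; auto. intros _. destruct (phi_nbr x j) as [b [hb e]]. exists b; auto.
    - intros b b' x _ _ h h'. unfold P in h, h'. rewrite h in h'. apply g_cancel_r in h'. auto. }
  set (I := list_prod [true; false] B).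
  set (Q := fun (i : bool * H) (y : H) => P (fst i) (snd i) (gmul (ginv (snd i)) y)).
  assert (E2 : m (fun y => exists i, In i I /\ Q i y) = 2%R).
  { rewrite m_union; auto.
    - rewrite (rsum_ext _ (fun i => m (P (fst i) (snd i)))).
      + unfold I. simpl. rewrite app_nil_r, rsum_app, !rsum_map. simpl. rewrite !E1. lra.
      + intros i. unfold Q. apply minv.
    - apply NoDup_prod2; auto.
    - intros [j b] [j' b'] y _ _ h h'. unfold Q, P in h, h'. simpl in h, h'.
      rewrite g_KV in h, h'. pose proof (eq_trans h (eq_sym h')) as hh.
      apply phi_inj in hh. destruct hh as [e1 ->].
      apply g_cancel_r in e1. apply g_inv_inj in e1. subst. auto. }
  assert (E3 : (m (fun y => exists i, In i I /\ Q i y) <= m (fun _ => True))%R).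
  { apply m_mono; auto. }
  lra.
Qed.


Theorem folner_r (H : Grp) : amenable H -> forall A : list H,
  exists Phi Y : list H, Phi <> [] /\ NoDup Phi /\ NoDup Y /\
    (forall f a, In f Phi -> In a A -> In (gmul f a) Y) /\ length Y <= 2 * length Phi.
Proof.
  intros am A. destruct (folner H am (map ginv A)) as [Psi [Y [h1 [h2 [h3 [h4 h5]]]]]].
  exists (map ginv Psi), (map ginv Y). split; [|split; [|split; [|split]]].
  - destruct Psi; simpl; congruence.
  - apply NoDup_map_inj; auto. apply g_inv_inj.
  - apply NoDup_map_inj; auto. apply g_inv_inj.
  - intros f a hf ha. apply in_map_iff in hf. destruct hf as [psi [<- hp]].
    replace (gmul (ginv psi) a) with (ginv (gmul (ginv a) psi)).
    + apply in_map. apply h4; auto. apply in_map; auto.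
    + rewrite g_inv_mul, g_invK. auto.
  - rewrite !length_map. lia.
Qed.

Definition gprod {G : Grp} (l : list G) : G := fold_right gmul gone l.

Lemma prod_app {G : Grp} (l1 l2 : list G) : gprod (l1 ++ l2) = gmul (gprod l1) (gprod l2).
Proof. induction l1; simpl. rewrite gmul1l; auto. unfold gprod in *. simpl. rewrite IHl1, gmulA. auto. Qed.

Lemma last_cons {T} (x y : T) l : last (y :: l) x = last l y.
Proof.
  revert x y. induction l as [|a l IH]; intros x y; auto.
  change (last (y :: a :: l) x) with (last (a :: l) x). rewrite (IH x a), (IH y a). auto.
Qed.

Section Paths.
Variable G : Grp.
Variable Sg : list G.

Lemma chain_word x l : chain (cayley_adj G Sg) x l -> exists ws, (forall s, In s ws -> In s Sg) /\
   length ws = length l /\ last l x = gmul x (gprod ws).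
Proof.
  revert x. induction l as [|y l IH]; intros x h.
  - exists []. simpl. split; [intros _ []|]. split; auto. unfold gprod; simpl; rewrite gmul1r; auto.
  - destruct h as [[s [hs ->]] hc]. destruct (IH _ hc) as [ws [w1 [w2 w3]]].
    exists (s :: ws). split; [intros t [<-|ht]; auto|]. split; [simpl; auto|].
    assert (E : last (gmul x s :: l) x = last l (gmul x s)).
    { apply last_cons. }
    rewrite E, w3. unfold gprod; simpl. rewrite gmulA. auto.
Qed.

Lemma path_of x ws : (forall s, In s ws -> In s Sg) -> exists l, chain (cayley_adj G Sg) x l /\
   length l = length ws /\ last l x = gmul x (gprod ws).
Proof.
  revert x. induction ws as [|s ws IH]; intros x h.
  - exists []. simpl. split; auto. split; auto. unfold gprod; simpl; rewrite gmul1r; auto.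
  - destruct (IH (gmul x s)) as [l [l1 [l2 l3]]]. intros t ht; apply h; right; auto.
    exists (gmul x s :: l). split; [split; auto; exists s; split; auto; apply h; left; auto|].
    split; [simpl; auto|].
    assert (E : last (gmul x s :: l) x = last l (gmul x s)).
    { apply last_cons. }
    rewrite E, l3. unfold gprod; simpl. rewrite gmulA. auto.
Qed.

Fixpoint Sig (n : nat) : list G :=
  match n with
  | 0 => [gone]
  | S n => Sig n ++ flat_map (fun s => map (gmul s) (Sig n)) Sg
  end.

Lemma Sig_mono n k s : In s (Sig n) -> In s (Sig (k + n)).
Proof. induction k; simpl; auto. intros h. apply in_app_iff. left. auto. Qed.

Lemma chain_vertices x l : chain (cayley_adj G Sg) x l -> forall v, In v (x :: l) ->
  exists sg, In sg (Sig (length l)) /\ v = gmul x sg.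
Proof.
  revert x. induction l as [|y l IH]; intros x h v hv.
  - destruct hv as [<-|[]]. exists gone. simpl. split; auto. rewrite gmul1r; auto.
  - destruct h as [[s [hs ->]] hc]. destruct hv as [<-|hv].
    + exists gone. split. pose proof (Sig_mono 0 (S (length l)) gone) as hm. rewrite Nat.add_0_r in hm. apply hm. simpl; auto.
      rewrite gmul1r; auto.
    + destruct (IH _ hc v hv) as [sg [h1 ->]]. exists (gmul s sg). split.
      * simpl. apply in_app_iff. right. apply in_flat_map. exists s. split; auto. apply in_map; auto.
      * rewrite gmulA. auto.
Qed.
End Paths.


Section Hom.
Variables (G K : Grp) (p : G -> K).
Hypothesis hp : is_hom G K p.

Lemma hom1 : p gone = gone.
Proof.
  apply (g_cancel_l K (p gone)). rewrite <- hp, !gmul1r. auto.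
Qed.

Lemma homV x : p (ginv x) = ginv (p x).
Proof.
  apply (g_cancel_l K (p x)). rewrite <- hp, !gmulVr. apply hom1.
Qed.

Lemma hom_prod l : p (gprod l) = gprod (map p l).
Proof. induction l; simpl. apply hom1. unfold gprod in *; simpl. rewrite hp, IHl. auto. Qed.

Variables (SG : list G) (SK : list K).
Hypothesis hS : forall s, In s SG -> In (p s) SK \/ p s = gone.

Lemma project x l : chain (cayley_adj G SG) x l -> exists l', chain (cayley_adj K SK) (p x) l' /\
  last l' (p x) = p (last l x) /\ length l' <= length l /\
  forall w, In w (p x :: l') -> exists v, In v (x :: l) /\ p v = w.
Proof.
  revert x. induction l as [|y l IH]; intros x h.
  - exists []. simpl. split; auto. split; auto. split; auto. intros w [<-|[]]. exists x; auto.
  - destruct h as [[s [hs ->]] hc]. destruct (IH _ hc) as [l' [c1 [c2 [c3 c4]]]].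
    rewrite last_cons.
    destruct (hS s hs) as [hs'|hs'].
    + exists (p (gmul x s) :: l'). split; [split; auto; exists (p s); split; auto|].
      split; [rewrite last_cons; auto|]. split; [simpl; lia|].
      intros w [<-|hw]. exists x; simpl; auto.
      destruct (c4 w hw) as [v [hv ev]]. exists v. split; auto. right; auto.
    + rewrite hp, hs', gmul1r in *. exists l'. split; auto. split; auto. split; [simpl; lia|].
      intros w hw. destruct (c4 w hw) as [v [hv ev]]. exists v. split; auto. right; auto.
Qed.
End Hom.


Lemma NoDup_map_inj_on {A B} (f : A -> B) l : (forall x y, In x l -> In y l -> f x = f y -> x = y) -> NoDup l -> NoDup (map f l).
Proof.
  intros hi nd; induction nd; simpl; constructor.
  - intros h. apply in_map_iff in h. destruct h as [y [e hy]]. apply hi in e; simpl; auto. subst. auto.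
  - apply IHnd. intros a b ha hb. apply hi; simpl; auto.
Qed.

Lemma NoDup_map_inv_on {A B} (f : A -> B) l a b : NoDup (map f l) -> In a l -> In b l -> f a = f b -> a = b.
Proof.
  induction l as [|c l IH]; simpl; intros nd ha hb e. destruct ha.
  inversion nd; subst. destruct ha as [<-|ha]; destruct hb as [<-|hb]; auto.
  - exfalso. apply H1. rewrite e. apply in_map; auto.
  - exfalso. apply H1. rewrite <- e. apply in_map; auto.
Qed.

Lemma NoDup_list_prod {A B} (l1 : list A) (l2 : list B) : NoDup l1 -> NoDup l2 -> NoDup (list_prod l1 l2).
Proof.
  intros n1 n2. induction n1; simpl. constructor.
  apply NoDup_app; auto.
  - apply NoDup_map_inj; auto. intros a b e; inversion e; auto.
  - intros [a b] h1 h2. apply in_map_iff in h1. destruct h1 as [? [e _]]. inversion e; subst.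
    apply in_prod_iff in h2. tauto.
Qed.

Theorem mainTheorem8 (H G K : Grp) (i : H -> G) (p : G -> K) :
  short_exact H G K i p ->
  amenable H ->
  finitely_generated G ->
  extraterrestrial_group K ->
  extraterrestrial_group G.
Proof.
  intros [hi [hp [iinj [psurj pker]]]] am [SG genG] [SK [symK [genK extK]]].
  set (L := fun k : K => proj1_sig (constructive_indefinite_description _ (psurj k))).
  assert (pL : forall k, p (L k) = k).
  { intros k. unfold L. destruct (constructive_indefinite_description _ _); auto. }
  assert (pLmap : forall w, map p (map L w) = w).
  { intros w. rewrite map_map. rewrite (map_ext _ (fun x => x)); auto. apply map_id. }
  set (wK := fun g : G => proj1_sig (constructive_indefinite_description _ (genK (p g)))).
  assert (hwK : forall g, (forall s, In s (wK g) -> In s SK) /\ p g = gprod (wK g)).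
  { intros g. unfold wK. destruct (constructive_indefinite_description _ _) as [w hw]. simpl. exact hw. }
  assert (pi1 : forall h, p (i h) = gone). { intros h. apply pker. exists h; auto. }
  set (c := fun g : G => gmul (ginv (gprod (map L (wK g)))) g).
  assert (pc : forall g, p (c g) = gone).
  { intros g. unfold c. rewrite hp, homV, hom_prod, pLmap; auto. rewrite (proj2 (hwK g)). apply gmulVl. }
  set (T := map L SK ++ map c SG).
  set (S := T ++ map ginv T).
  assert (hS : forall s, In s S -> In (p s) SK \/ p s = gone).
  { intros s hs. unfold S, T in hs. rewrite !in_app_iff in hs. destruct hs as [[hs|hs]|hs].
    - apply in_map_iff in hs. destruct hs as [k [<- hk]]. left. rewrite pL. auto.
    - apply in_map_iff in hs. destruct hs as [g [<- hg]]. right. apply pc.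
    - apply in_map_iff in hs. destruct hs as [t [<- ht]]. rewrite homV; auto. apply in_app_iff in ht.
      destruct ht as [ht|ht].
      + apply in_map_iff in ht. destruct ht as [k [<- hk]]. left. rewrite pL. apply symK; auto.
      + apply in_map_iff in ht. destruct ht as [g [<- hg]]. right. rewrite pc. apply g_inv1. }
  assert (LS : forall k, In k SK -> In (L k) S).
  { intros k hk. unfold S, T. rewrite !in_app_iff. left; left. apply in_map; auto. }
  exists S. split; [|split].
  { intros s hs. unfold S in *. rewrite in_app_iff in *. destruct hs as [hs|hs].
    - right. apply in_map; auto.
    - left. apply in_map_iff in hs. destruct hs as [t [<- ht]]. rewrite g_invK. auto. }
  { intros g. destruct (genG g) as [w [hw ->]].
    exists (flat_map (fun s => map L (wK s) ++ [c s]) w). split.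
    - intros s hs. apply in_flat_map in hs. destruct hs as [x [hx hs]]. apply in_app_iff in hs.
      destruct hs as [hs|[<-|[]]].
      + apply in_map_iff in hs. destruct hs as [k [<- hk]]. apply LS. apply (proj1 (hwK x)); auto.
      + unfold S, T. rewrite !in_app_iff. left; right. apply in_map; auto.
    - induction w as [|s w IHw]; auto. simpl. rewrite IHw.
      + change (fold_right gmul gone (flat_map (fun s0 : G => map L (wK s0) ++ [c s0]) w)) with
          (gprod (flat_map (fun s0 : G => map L (wK s0) ++ [c s0]) w)).
        set (X := flat_map (fun s0 : G => map L (wK s0) ++ [c s0]) w) in *.
        change (gmul s (gprod X) = gprod ((map L (wK s) ++ [c s]) ++ X)).
        rewrite prod_app, prod_app. f_equal. unfold gprod at 2. simpl. rewrite gmul1r. unfold c. rewrite g_KV. auto.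
      + intros t ht. apply hw. right; auto. }
  intros mm. destruct (extK (2 * mm)) as [k hk]. exists k. intros r.
  destruct (hk r) as [U [F [O [mu [U0 [nU [nF [nO [dUF [dUO [dFO [len [perm [dist path]]]]]]]]]]]]]].
  set (Wf := fun u : K => epsilon (inhabits []) (fun ws : list K => (forall s, In s ws -> In s SK) /\
                   length ws <= k /\ mu u = gmul u (gprod ws))).
  assert (hWf : forall u, In u U -> (forall s, In s (Wf u) -> In s SK) /\ length (Wf u) <= k /\ mu u = gmul u (gprod (Wf u))).
  { intros u hu. unfold Wf. apply (epsilon_spec (inhabits []) (fun ws : list K => (forall s, In s ws -> In s SK) /\
                   length ws <= k /\ mu u = gmul u (gprod ws))).
    destruct (dist u hu) as [l [hc [he hl]]]. destruct (chain_word K SK u l hc) as [ws [w1 [w2 w3]]].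
    exists ws. split; auto. split. lia. rewrite <- he, w3. auto. }
  set (mut := fun g : G => gmul g (gprod (map L (Wf (p g))))).
  assert (pmut : forall g, In (p g) U -> p (mut g) = mu (p g)).
  { intros g hg. unfold mut. rewrite hp, hom_prod, pLmap; auto. symmetry. apply hWf; auto. }
  assert (muinj : forall a b, In a U -> In b U -> mu a = mu b -> a = b).
  { intros a b ha hb e. apply (NoDup_map_inv_on mu U); auto.
    apply (Permutation_NoDup (Permutation_sym perm)). auto. }
  assert (muO : forall u, In u U -> In (mu u) O).
  { intros u hu. apply (Permutation_in _ perm). apply in_map; auto. }
  set (Sgm := Sig G S r).
  set (D := flat_map (fun u => map (fun sg => gmul (L u) sg) Sgm) U).
  set (off := fun d : G => epsilon (inhabits (@gone H)) (fun h => i h = gmul d (ginv (L (p d))))).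
  assert (hoff : forall d, i (off d) = gmul d (ginv (L (p d)))).
  { intros d. unfold off. apply (epsilon_spec (inhabits (@gone H)) (fun h => i h = gmul d (ginv (L (p d))))).
    apply pker. rewrite hp, homV, pL; auto. apply gmulVr. }
  destruct (folner_r H am (map off D)) as [Phi [Y [Phi0 [nPhi [nY [cov lenY]]]]]].
  set (emb := fun pr : K * H => gmul (i (snd pr)) (L (fst pr))).
  assert (pemb : forall pr, p (emb pr) = fst pr).
  { intros pr. unfold emb. rewrite hp, pi1, gmul1l, pL. auto. }
  set (Ut := map emb (list_prod U Phi)).
  set (Ot := map mut Ut).
  set (Ft := nodup dec (map emb (list_prod F Y))).
  assert (inUt : forall x, In x Ut -> In (p x) U /\ exists u f, In u U /\ In f Phi /\ x = gmul (i f) (L u)).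
  { intros x hx. unfold Ut in hx. apply in_map_iff in hx. destruct hx as [[u f] [<- hx]].
    apply in_prod_iff in hx. rewrite pemb. simpl. split. tauto. exists u, f. tauto. }
  assert (inFt : forall x, In x Ft -> In (p x) F).
  { intros x hx. unfold Ft in hx. apply nodup_In in hx. apply in_map_iff in hx. destruct hx as [[u f] [<- hx]].
    apply in_prod_iff in hx. rewrite pemb. simpl. tauto. }
  assert (inOt : forall x, In x Ot -> In (p x) O).
  { intros x hx. unfold Ot in hx. apply in_map_iff in hx. destruct hx as [g [<- hg]].
    destruct (inUt g hg) as [hu _]. rewrite pmut; auto. }
  exists Ut, Ft, Ot, mut.
  split; [|split; [|split; [|split; [|split; [|split; [|split; [|split; [|split; [|split]]]]]]]]].
  - destruct U as [|u U']; [congruence|]. destruct Phi as [|f Phi']; [congruence|]. simpl. discriminate.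
  - apply NoDup_map_inj. 2: apply NoDup_list_prod; auto.
    intros [u f] [u' f'] e. assert (eu : u = u'). { apply (f_equal p) in e. rewrite !pemb in e. auto. }
    subst u'. unfold emb in e. simpl in e. apply g_cancel_r in e. apply iinj in e. subst. auto.
  - apply NoDup_nodup.
  - apply NoDup_map_inj_on.
    + intros x y hx hy e. destruct (inUt x hx) as [ux _]. destruct (inUt y hy) as [uy _].
      assert (epx : p x = p y). { apply muinj; auto. rewrite <- !pmut; auto. rewrite e. auto. }
      unfold mut in e. rewrite epx in e. apply g_cancel_r in e. auto.
    + apply NoDup_map_inj. 2: apply NoDup_list_prod; auto.
      intros [u f] [u' f'] e. assert (eu : u = u'). { apply (f_equal p) in e. rewrite !pemb in e. auto. }
      subst u'. unfold emb in e. simpl in e. apply g_cancel_r in e. apply iinj in e. subst. auto.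
  - intros v h1 h2. apply (dUF (p v)). apply inUt; auto. apply inFt; auto.
  - intros v h1 h2. apply (dUO (p v)). apply inUt; auto. apply inOt; auto.
  - intros v h1 h2. apply (dFO (p v)). apply inFt; auto. apply inOt; auto.
  - assert (l1 : length Ut = length U * length Phi). { unfold Ut. rewrite length_map, length_prod. auto. }
    assert (l2 : length Ft <= length F * length Y).
    { unfold Ft. rewrite <- length_prod, <- (length_map emb). apply NoDup_incl_length. apply NoDup_nodup.
      intros x hx. apply nodup_In in hx. auto. }
    assert (l3 : mm * length Ft <= mm * (length F * (2 * length Phi))).
    { apply Nat.mul_le_mono_l. eapply Nat.le_trans. exact l2. apply Nat.mul_le_mono_l. auto. }
    assert (l4 : 2 * mm * length F * length Phi <= length U * length Phi).
    { apply Nat.mul_le_mono_r. auto. }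
    lia.
  - apply Permutation_refl.
  - intros u hu. destruct (inUt u hu) as [pu _]. destruct (hWf (p u) pu) as [w1 [w2 w3]].
    destruct (path_of G S u (map L (Wf (p u)))) as [l [c1 [c2 c3]]].
    { intros s hs. apply in_map_iff in hs. destruct hs as [kk [<- hkk]]. apply LS. auto. }
    exists l. split; auto. split; auto. rewrite c2, length_map. auto.
  - intros x l hx hc hl. destruct (le_lt_dec r (length l)) as [hr|hr]; [right; auto|left].
    destruct (project G K p hp S SK hS x l hc) as [l' [c1 [c2 [c3 c4]]]].
    destruct (inUt x hx) as [px [u [f [hu [hf ->]]]]].
    assert (lastO : In (last l' (p (gmul (i f) (L u)))) O). { rewrite c2. apply inOt; auto. }
    destruct (path _ l' px c1 lastO) as [[w [hw wF]]|hr'].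
    2: { lia. }
    destruct (c4 w hw) as [v [hv pv]].
    destruct (chain_vertices G S _ l hc v hv) as [sg [hsg ev]].
    set (d := gmul (L u) sg).
    assert (hd : In d D).
    { unfold D. apply in_flat_map. exists u. split; auto. apply in_map_iff. exists sg. split; auto.
      unfold Sgm. pose proof (Sig_mono G S (length l) (r - length l) sg hsg) as hm.
      replace (r - length l + length l) with r in hm by lia. auto. }
    assert (evd : v = gmul (i f) d). { rewrite ev. unfold d. rewrite gmulA. auto. }
    assert (pd : p d = w). { rewrite <- pv, evd, hp, pi1, gmul1l. auto. }
    exists v. split; auto. unfold Ft. apply nodup_In. apply in_map_iff.
    exists (w, gmul f (off d)). split.
    + unfold emb. simpl. rewrite hi, hoff, pd, <- gmulA, g_mulVKr. auto.
    + apply in_prod_iff. split; auto. apply cov; auto. apply in_map; auto.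
Qed.
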